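(* Let $L$ be a sublattice of $A_n$ of rank $n$. The boundary of $\Sigma^c(L)$ in $\mathbb R^{n+1}$ equals the lower graph of $h_{\triangle,L}$: $$\partial\Sigma^c(L)=\{\,y-h_{\triangle,L}(y)(1,\dots,1): y\in H_0\,\}.$$
   Context: Let $n\ge 1$, $H_0=\{x\in\mathbb R^{n+1}:\sum_i x_i=0\}$ and $A_n=H_0\cap\mathbb Z^{n+1}$. Write $x\le y$ iff $x_i\le y_i$ for all $i$. Let $\Sigma^{\mathbb R}(L)=\{x\in\mathbb R^{n+1}: x\not\le q\text{ for all }q\in L\}$ and let $\Sigma^c(L)$ be its topological closure in $\mathbb R^{n+1}$. For $p,q\in H_0$ let $d_\triangle(p,q)=\max_i(p_i-q_i)$, and for $x\in H_0$ let $h_{\triangle,L}(x)=\min_{p\in L}d_\triangle(x,p)$. *)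

(* Defs.v *)
(* classical reals. Points of R^{n+1} are functions nat -> R,
   of which only the coordinates 0..n are used. *)
From Stdlib Require Import Reals ZArith ClassicalEpsilon.
Open Scope R_scope.

Fixpoint sumto (f : nat -> R) (m : nat) : R :=
  match m with O => f O | S k => sumto f k + f (S k) end.

Fixpoint maxto (f : nat -> R) (m : nat) : R :=
  match m with O => f O | S k => Rmax (maxto f k) (f (S k)) end.

Definition H0 (n : nat) (x : nat -> R) : Prop := sumto x n = 0.

(* the root lattice A_n = H_0 ∩ Z^{n+1}; integer vectors are nat -> Z,
   normalized to vanish outside the indices 0..n *)
Definition inA (n : nat) (p : nat -> Z) : Prop :=
  (forall i, (n < i)%nat -> p i = 0%Z) /\ sumto (fun i => IZR (p i)) n = 0.

Definition toR (p : nat -> Z) : nat -> R := fun i => IZR (p i).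

Definition sublattice (n : nat) (L : (nat -> Z) -> Prop) : Prop :=
  (forall p, L p -> inA n p) /\
  L (fun _ => 0%Z) /\
  (forall p q, L p -> L q -> L (fun i => (p i + q i)%Z)) /\
  (forall p, L p -> L (fun i => (- p i)%Z)).

Definition has_rank (n : nat) (r : nat) (L : (nat -> Z) -> Prop) : Prop :=
  exists v : nat -> nat -> Z,
    (forall k, (k < r)%nat -> L (v k)) /\
    (forall c : nat -> R,
        (forall i, (i <= n)%nat ->
           match r with O => 0 | S r' => sumto (fun k => c k * IZR (v k i)) r' end = 0) ->
        forall k, (k < r)%nat -> c k = 0).

Definition vle (n : nat) (x y : nat -> R) : Prop := forall i, (i <= n)%nat -> x i <= y i.

Definition SigmaR (n : nat) (L : (nat -> Z) -> Prop) (x : nat -> R) : Prop :=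
  forall q, L q -> ~ vle n x (toR q).

Definition near (n : nat) (eps : R) (x z : nat -> R) : Prop :=
  forall i, (i <= n)%nat -> Rabs (x i - z i) < eps.

Definition closure (n : nat) (S : (nat -> R) -> Prop) (x : nat -> R) : Prop :=
  forall eps, 0 < eps -> exists z, S z /\ near n eps x z.

Definition interior (n : nat) (S : (nat -> R) -> Prop) (x : nat -> R) : Prop :=
  exists eps, 0 < eps /\ forall z, near n eps x z -> S z.

Definition boundary (n : nat) (S : (nat -> R) -> Prop) (x : nat -> R) : Prop :=
  closure n S x /\ ~ interior n S x.

Definition Sigmac (n : nat) (L : (nat -> Z) -> Prop) : (nat -> R) -> Prop :=
  closure n (SigmaR n L).

Definition dtri (n : nat) (p q : nat -> R) : R := maxto (fun i => p i - q i) n.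

Definition is_min_dist (n : nat) (L : (nat -> Z) -> Prop) (x : nat -> R) (t : R) : Prop :=
  (exists p, L p /\ dtri n x (toR p) = t) /\
  (forall p, L p -> t <= dtri n x (toR p)).

Definition htri (n : nat) (L : (nat -> Z) -> Prop) (x : nat -> R) : R :=
  epsilon (inhabits 0) (fun t => is_min_dist n L x t).

(* Main.v *)
Require Import Defs.
From Stdlib Require Import Reals ZArith.
From Stdlib Require Import Lra Lia Classical ClassicalEpsilon.
Open Scope R_scope.

Lemma maxto_ge f m i : (i <= m)%nat -> f i <= maxto f m.
Proof.
  induction m as [|k IH]; intros Hi; simpl.
  - assert (i = 0%nat) by lia; subst; lra.
  - destruct (Nat.eq_dec i (S k)) as [->|Hne].
    + apply Rmax_r.
    + eapply Rle_trans; [apply IH; lia| apply Rmax_l].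
Qed.

Lemma maxto_att f m : exists i, (i <= m)%nat /\ maxto f m = f i.
Proof.
  induction m as [|k IH]; simpl.
  - exists 0%nat; split; [lia|reflexivity].
  - destruct IH as [i [Hi Ei]].
    destruct (Rle_dec (maxto f k) (f (S k))).
    + exists (S k); split; [lia|]; now apply Rmax_right.
    + exists i; split; [lia|]; rewrite Rmax_left; lra.
Qed.

Lemma maxto_le f m c : (forall i, (i <= m)%nat -> f i <= c) -> maxto f m <= c.
Proof. intros H; destruct (maxto_att f m) as [i [Hi ->]]; auto. Qed.

Lemma maxto_lt f m c : (forall i, (i <= m)%nat -> f i < c) -> maxto f m < c.
Proof. intros H; destruct (maxto_att f m) as [i [Hi ->]]; auto. Qed.

Lemma maxto_ext f g m : (forall i, (i <= m)%nat -> f i = g i) -> maxto f m = maxto g m.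
Proof.
  intros H; apply Rle_antisym; apply maxto_le; intros i Hi;
  [rewrite H by lia | rewrite <- H by lia]; now apply maxto_ge.
Qed.

Lemma maxto_shift f m c : maxto (fun i => f i + c) m = maxto f m + c.
Proof.
  apply Rle_antisym.
  - apply maxto_le; intros i Hi; pose proof (maxto_ge f m i Hi); lra.
  - destruct (maxto_att f m) as [i [Hi ->]].
    pose proof (maxto_ge (fun i => f i + c) m i Hi); simpl in *; lra.
Qed.

Lemma sumto_shift f m c : sumto (fun i => f i + c) m = sumto f m + INR (S m) * c.
Proof.
  induction m as [|k IH]; simpl sumto.
  - simpl; lra.
  - rewrite IH. rewrite (S_INR (S k)). lra.
Qed.

Lemma sumto_minus f g m : sumto (fun i => f i - g i) m = sumto f m - sumto g m.
Proof. induction m as [|k IH]; simpl; [lra| rewrite IH; lra]. Qed.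

Lemma sumto_le_max f m : sumto f m <= INR (S m) * maxto f m.
Proof.
  set (M := maxto f m).
  assert (forall k, (k <= m)%nat -> sumto f k <= INR (S k) * M).
  { induction k as [|k IH]; intros Hk; simpl sumto.
    - simpl. pose proof (maxto_ge f m 0 ltac:(lia)). unfold M; lra.
    - pose proof (IH ltac:(lia)). pose proof (maxto_ge f m (S k) Hk).
      rewrite (S_INR (S k)). unfold M in *; lra. }
  apply H; lia.
Qed.

Lemma fin_min_pos (f : nat -> R) m : (forall i, (i <= m)%nat -> 0 < f i) ->
  exists d, 0 < d /\ forall i, (i <= m)%nat -> d <= f i.
Proof.
  induction m as [|k IH]; intros H.
  - exists (f 0%nat); split; [apply H; lia|]. intros i Hi; assert (i=0%nat) by lia; subst; lra.
  - destruct IH as [d [Hd Hd']]. { intros; apply H; lia. }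
    exists (Rmin d (f (S k))). split.
    + apply Rmin_pos; auto; apply H; lia.
    + intros i Hi. destruct (Nat.eq_dec i (S k)) as [->|].
      * apply Rmin_r.
      * eapply Rle_trans; [apply Rmin_l| apply Hd'; lia].
Qed.

Section S.
Variable n : nat.
Variable L : (nat -> Z) -> Prop.
Hypothesis HL : sublattice n L.

Lemma exists_min x : exists t, is_min_dist n L x t.
Proof.
  destruct HL as [HA [H0L _]].
  set (v := fun p => dtri n x (toR p)).
  set (E := fun r => exists p, L p /\ r = - v p).
  set (s := sumto x n).
  assert (Npos : 0 < INR (S n)) by (apply lt_0_INR; lia).
  assert (Hlow : forall p, L p -> s / INR (S n) <= v p).
  { intros p Hp. destruct (HA p Hp) as [_ Hs].
    pose proof (sumto_le_max (fun i => x i - toR p i) n) as Hm.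
    rewrite sumto_minus in Hm. unfold toR in Hm at 1. rewrite Hs in Hm.
    unfold v, dtri. fold s in Hm.
    apply (Rmult_le_reg_l (INR (S n))); auto. field_simplify; lra. }
  destruct (completeness E) as [m [Hub Hlub]].
  { exists (- (s / INR (S n))). intros r [p [Hp ->]]. pose proof (Hlow p Hp); lra. }
  { exists (- v (fun _ => 0%Z)). exists (fun _ => 0%Z); auto. }
  set (h := - m).
  assert (Hge : forall p, L p -> h <= v p).
  { intros p Hp. assert (E (- v p)) by (exists p; auto). pose proof (Hub _ H). unfold h; lra. }
  assert (Happ : forall d, 0 < d -> exists p, L p /\ v p < h + d).
  { intros d Hd. destruct (classic (exists p, L p /\ v p < h + d)) as [|Hn]; auto.
    exfalso. assert (is_upper_bound E (m - d)).
    { intros r [p [Hp ->]]. destruct (Rlt_le_dec (v p) (h + d)).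
      - exfalso; apply Hn; eauto.
      - unfold h in *; lra. }
    pose proof (Hlub _ H). lra. }
  destruct (fin_min_pos (fun i => x i - h + IZR (up (h - x i))) n) as [d [Hd Hd']].
  { intros i _. destruct (archimed (h - x i)). lra. }
  destruct (Happ d Hd) as [p [Hp Hvp]].
  exists h. split; [| exact Hge].
  exists p. split; auto. apply Rle_antisym; [|apply Hge; auto].
  apply maxto_le. intros i Hi.
  pose proof (maxto_ge (fun i => x i - toR p i) n i Hi) as Hmi.
  fold (dtri n x (toR p)) in Hmi. fold (v p) in Hmi.
  pose proof (Hd' i Hi). destruct (archimed (h - x i)) as [A1 A2].
  unfold toR in *.
  assert (IZR (- up (h - x i)) < IZR (p i)) by (rewrite opp_IZR; lra).
  apply lt_IZR in H0.
  assert (Z.le (1 - up (h - x i)) (p i)) by lia.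
  apply IZR_le in H1. rewrite minus_IZR in H1. lra.
Qed.

Lemma min_unique x t1 t2 : is_min_dist n L x t1 -> is_min_dist n L x t2 -> t1 = t2.
Proof.
  intros [[p1 [H1 E1]] A1] [[p2 [H2 E2]] A2].
  specialize (A1 p2 H2); specialize (A2 p1 H1); lra.
Qed.

Lemma htri_spec x : is_min_dist n L x (htri n L x).
Proof. unfold htri. apply epsilon_spec. apply exists_min. Qed.

Lemma htri_le x p : L p -> htri n L x <= dtri n x (toR p).
Proof. intros; now apply (proj2 (htri_spec x)). Qed.

Lemma htri_att x : exists p, L p /\ dtri n x (toR p) = htri n L x.
Proof. apply (proj1 (htri_spec x)). Qed.

Lemma dtri_shift x c p : dtri n (fun i => x i + c) p = dtri n x p + c.
Proof.
  unfold dtri. rewrite <- maxto_shift. apply maxto_ext; intros; lra.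
Qed.

Lemma htri_shift x c : htri n L (fun i => x i + c) = htri n L x + c.
Proof.
  symmetry. apply (min_unique (fun i => x i + c)); [|apply htri_spec].
  destruct (htri_spec x) as [[p [Hp E]] A]. split.
  - exists p; split; auto. rewrite dtri_shift; lra.
  - intros q Hq. rewrite dtri_shift. specialize (A q Hq). lra.
Qed.

Lemma htri_ext x x' : (forall i, (i <= n)%nat -> x i = x' i) -> htri n L x = htri n L x'.
Proof.
  intros H.
  assert (Hd : forall p, dtri n x p = dtri n x' p).
  { intros p; unfold dtri; apply maxto_ext; intros i Hi; rewrite H; auto. }
  apply (min_unique x); [apply htri_spec|].
  destruct (htri_spec x') as [[p [Hp E]] A]. split.
  - exists p; rewrite Hd; auto.
  - intros q Hq; rewrite Hd; auto.
Qed.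

Lemma htri_lip eps x z : near n eps x z -> htri n L x < htri n L z + eps.
Proof.
  intros Hn. destruct (htri_att z) as [p [Hp E]].
  eapply Rle_lt_trans; [apply (htri_le x p Hp)|]. rewrite <- E.
  unfold dtri. apply maxto_lt. intros i Hi.
  pose proof (maxto_ge (fun i => z i - toR p i) n i Hi).
  destruct (Rabs_def2 _ _ (Hn i Hi)). simpl in *. lra.
Qed.

Lemma near_sym eps x z : near n eps x z -> near n eps z x.
Proof. intros H i Hi. rewrite Rabs_minus_sym; auto. Qed.

Lemma sigmaR_iff x : SigmaR n L x <-> 0 < htri n L x.
Proof.
  split.
  - intros H. destruct (htri_att x) as [p [Hp E]]. rewrite <- E.
    destruct (Rlt_le_dec 0 (dtri n x (toR p))); auto. exfalso.
    apply (H p Hp). intros i Hi.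
    pose proof (maxto_ge (fun i => x i - toR p i) n i Hi). unfold dtri in r. simpl in *. lra.
  - intros H q Hq Hv. pose proof (htri_le x q Hq).
    assert (dtri n x (toR q) <= 0).
    { apply maxto_le. intros i Hi. pose proof (Hv i Hi). lra. }
    lra.
Qed.

Lemma near_shift eps x : 0 < eps -> forall c, Rabs c < eps -> near n eps x (fun i => x i + c).
Proof. intros Heps c Hc i Hi. replace (x i - (x i + c)) with (- c) by ring. rewrite Rabs_Ropp; auto. Qed.

Lemma sigmac_iff x : Sigmac n L x <-> 0 <= htri n L x.
Proof.
  split.
  - intros H. destruct (Rlt_le_dec (htri n L x) 0) as [Hl|]; auto. exfalso.
    destruct (H (- htri n L x)) as [z [Hz Hn]]; [lra|].
    apply sigmaR_iff in Hz. pose proof (htri_lip _ _ _ (near_sym _ _ _ Hn)). lra.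
  - intros H eps Heps. exists (fun i => x i + eps / 2). split.
    + apply sigmaR_iff. rewrite htri_shift. lra.
    + apply near_shift; auto. rewrite Rabs_right; lra.
Qed.

Lemma closure_sigmac x : Defs.closure n (Sigmac n L) x <-> 0 <= htri n L x.
Proof.
  split.
  - intros H. destruct (Rlt_le_dec (htri n L x) 0) as [Hl|]; auto. exfalso.
    destruct (H (- htri n L x)) as [z [Hz Hn]]; [lra|].
    apply sigmac_iff in Hz. pose proof (htri_lip _ _ _ (near_sym _ _ _ Hn)). lra.
  - intros H eps Heps. exists x. split.
    + now apply sigmac_iff.
    + intros i Hi. replace (x i - x i) with 0 by ring. rewrite Rabs_R0; auto.
Qed.

Lemma interior_sigmac x : Defs.interior n (Sigmac n L) x <-> 0 < htri n L x.
Proof.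
  split.
  - intros [eps [Heps H]].
    assert (Hz := H (fun i => x i + - (eps/2))).
    rewrite sigmac_iff, htri_shift in Hz. apply Rlt_le_trans with (eps/2); [lra|].
    enough (0 <= htri n L x + - (eps / 2)) by lra. apply Hz.
    apply near_shift; auto. rewrite Rabs_left; lra.
  - intros H. exists (htri n L x). split; auto. intros z Hn.
    apply sigmac_iff. pose proof (htri_lip _ _ _ Hn). lra.
Qed.

End S.

Theorem mainTheorem10 (n : nat) (L : (nat -> Z) -> Prop) :
  (1 <= n)%nat ->
  sublattice n L ->
  has_rank n n L ->
  forall x : nat -> R,
    boundary n (Sigmac n L) x <->
    exists y : nat -> R, H0 n y /\
      forall i, (i <= n)%nat -> x i = y i - htri n L y.
Proof.
  intros _ HL _ x.
  assert (Hb : boundary n (Sigmac n L) x <-> htri n L x = 0).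
  { unfold boundary. rewrite closure_sigmac, interior_sigmac by auto. lra. }
  rewrite Hb. clear Hb.
  assert (Npos : 0 < INR (S n)) by (apply lt_0_INR; lia).
  split.
  - intros H. set (c := - sumto x n / INR (S n)).
    exists (fun i => x i + c). split.
    + unfold H0. rewrite sumto_shift. unfold c. field. lra.
    + intros i Hi. rewrite htri_shift by auto. rewrite H. ring.
  - intros [y [_ Hy]].
    rewrite (htri_ext n L HL x (fun i => y i + - htri n L y)).
    + rewrite htri_shift by auto. ring.
    + intros i Hi. rewrite Hy; auto; ring.
Qed.
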